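(* Let $F$ be a graph (2-uniform) and let $\epsilon > 0$. Then there exist $n_0$ and $\delta > 0$ (depending only on $\epsilon$ and $F$) such that the following holds. Let $V$ be a vertex set of size $n = |V| > n_0$. If $G = (V,E)$ is a graph with $|E| = \mathrm{ex}^*(n,F) + \epsilon\binom{n}{2}$ edges, then for every set of edges $E_0 \subset V^{(2)} \setminus E$ there exists a subset $X \subset E$ such that the graph $(V, E_0 \cup X)$ contains at least $\delta n^{|F|}$ induced copies of $F$.
   Context: $V^{(2)}$ denotes the set of 2-element subsets of $V$, and $|F|$ is the number of vertices of $F$. For an $n$-vertex set $V$, $\mathrm{ex}^*(n,F)$ is the maximum of $|E|$ over all graphs $G=(V,E)$ for which there exists an edge set $E_0 \subset V^{(2)}$ with $E \cap E_0 = \emptyset$ such that for every $X \subset E$ the graph $(V, E_0 \cup X)$ contains no induced subgraph isomorphic to $F$. *)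

(* Defs.v *)
From mathcomp Require Import all_boot all_order all_algebra.
From mathcomp Require Import reals.
Set Implicit Arguments. Unset Strict Implicit. Unset Printing Implicit Defensive.

Definition pairs (T : finType) : {set {set T}} := [set e : {set T} | #|e| == 2].

Definition is_graph (T : finType) (E : {set {set T}}) : bool := E \subset pairs T.

Definition induced_copy (TF V : finType) (EF : {set {set TF}})
  (E : {set {set V}}) (S : {set V}) : bool :=
  [exists f : {ffun TF -> V},
     [&& injectiveb f, f @: setT == S &
      [forall x, forall y, (x != y) ==>
          (([set x; y] \in EF) == ([set f x; f y] \in E))]]].

Definition n_induced (TF V : finType) (EF : {set {set TF}})
  (E : {set {set V}}) : nat :=
  #|[set S : {set V} | induced_copy EF E S]|.

Definition has_induced (TF V : finType) (EF : {set {set TF}})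
  (E : {set {set V}}) : bool := 0 < n_induced EF E.

Definition exstar_good (TF : finType) (EF : {set {set TF}}) (n : nat)
  (E : {set {set 'I_n}}) : bool :=
  is_graph E &&
  [exists E0 : {set {set 'I_n}},
     [&& E0 \subset pairs 'I_n, [disjoint E0 & E] &
      [forall X : {set {set 'I_n}},
          (X \subset E) ==> ~~ has_induced EF (E0 :|: X)]]].

Definition exstar (TF : finType) (EF : {set {set TF}}) (n : nat) : nat :=
  \max_(E : {set {set 'I_n}} | exstar_good EF E) #|E|.

(* Main.v *)
Require Import Defs.
From mathcomp Require Import all_boot all_order all_algebra all_fingroup.
From mathcomp Require Import reals ring lra zify.
From Stdlib Require Import Classical.
Set Implicit Arguments. Unset Strict Implicit. Unset Printing Implicit Defensive.

Lemma pair_perm (T : finType) (e e' : {set T}) : #|e| == 2 -> #|e'| == 2 ->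
  exists s : {perm T}, [set s x | x in e] = e'.
Proof.
move=> /cards2P [a [b [ab ->]]] /cards2P [c [d [cd ->]]].
pose b' := tperm a c b.
have b'c : b' != c.
  apply/eqP => H; move: ab.
  by rewrite -(perm_inj (etrans H (esym (tpermL a c)))) eqxx.
exists (tperm a c * tperm b' d)%g.
rewrite imsetU1 imset_set1 !permM tpermL.
rewrite (tpermD b'c) ?(eq_sym c) //.
  by rewrite -/b' tpermL.
by rewrite eq_sym.
Qed.


Section Count.
Variables (m n : nat).
Definition pull (g : {ffun 'I_m -> 'I_n}) (E : {set {set 'I_n}}) : {set {set 'I_m}} :=
  [set e : {set 'I_m} | [set g x | x in e] \in E].
Definition Nc (e : {set 'I_n}) :=
  \sum_(g : {ffun 'I_m -> 'I_n} | injectiveb g) #|[set e' : {set 'I_m} | [set g x | x in e'] == e]|.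
Definition SS (E : {set {set 'I_n}}) :=
  \sum_(g : {ffun 'I_m -> 'I_n} | injectiveb g) #|pull g E|.

Lemma SS_Nc E : SS E = \sum_(e in E) Nc e.
Proof.
rewrite /SS /Nc exchange_big /=; apply: eq_bigr => g _.
rewrite -sum1_card (partition_big (F := fun _ => 1) (fun e' : {set 'I_m} => [set g x | x in e']) (fun e => e \in E)) /=.
  apply: eq_bigr => e eE; rewrite -sum1_card; apply: eq_bigl => e'.
  by rewrite !inE; case: eqP => [->|]; rewrite ?eE ?andbF.
by move=> e'; rewrite inE.

Qed.

Lemma Nc_perm (e : {set 'I_n}) (s : {perm 'I_n}) : Nc [set s x | x in e] = Nc e.
Proof.
rewrite /Nc (reindex_inj (h := fun g : {ffun 'I_m -> 'I_n} => [ffun x => s (g x)])).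
  apply: eq_big => g.
    apply/injectiveP/injectiveP => H x y.
      by move=> E; apply: H; rewrite !ffunE E.
    by rewrite !ffunE => /perm_inj; apply: H.
  move=> _; apply: eq_card => e'; rewrite !inE.
  have -> : [set [ffun x => s (g x)] x | x in e'] = [set s x | x in [set g x | x in e']].
    by rewrite -imset_comp; apply: eq_imset => x; rewrite ffunE.
  by rewrite (inj_eq (imset_inj (@perm_inj _ s))).
move=> g1 g2 /ffunP H; apply/ffunP => x; move: (H x); rewrite !ffunE; apply: perm_inj.
Qed.

Lemma pull_pairs (g : {ffun 'I_m -> 'I_n}) : injectiveb g -> pull g (pairs 'I_n) = pairs 'I_m.
Proof.
move=> /injectiveP ig; apply/setP => e; rewrite !inE.
by rewrite card_imset.
Qed.

Lemma card_pairs k : #|pairs 'I_k| = 'C(k, 2).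
Proof. by rewrite /pairs card_draws card_ord. Qed.

Lemma SS_eq (E : {set {set 'I_n}}) : E \subset pairs 'I_n ->
  SS E * 'C(n, 2) = #|E| * (#|[set g : {ffun 'I_m -> 'I_n} | injectiveb g]| * 'C(m, 2)).
Proof.
move=> Ep.
have SSp : SS (pairs 'I_n) = #|[set g : {ffun 'I_m -> 'I_n} | injectiveb g]| * 'C(m, 2).
  rewrite /SS -sum_nat_const; apply: eq_big => g; first by rewrite inE.
  by move=> ig; rewrite pull_pairs // card_pairs.
case: (set_0Vmem (pairs 'I_n)) => [p0|[p0 p0p]].
  have -> : E = set0 by apply/eqP; rewrite -subset0 -p0.
  by rewrite cards0 /SS big1 // => g _; apply/eqP; rewrite cards_eq0; apply/eqP/setP => e; rewrite !inE.
have NcE : forall e, e \in pairs 'I_n -> Nc e = Nc p0.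
  move=> e; rewrite inE => ep; move: p0p; rewrite inE => /pair_perm /(_ ep) [s <-].
  by rewrite Nc_perm.
rewrite -SSp !SS_Nc.
rewrite (eq_bigr (fun _ => Nc p0)); last by move=> e /(subsetP Ep) /NcE.
rewrite [X in _ = _ * X](eq_bigr (fun _ => Nc p0)); last by move=> e /NcE.
by rewrite !sum_nat_const card_pairs -!mulnA (mulnC (Nc p0)).
Qed.
End Count.


Lemma leq_sum_sub (I : finType) (P P' : pred I) (F : I -> nat) :
  (forall i, P i -> P' i) -> \sum_(i | P i) F i <= \sum_(i | P' i) F i.
Proof. move=> H; apply: (sub_le_big (le := leq)) => // x y; exact: leq_addr. Qed.

Lemma sum_ind (I : finType) (P : pred I) :
  \sum_(i : I) nat_of_bool (P i) = #|[set i | P i]|.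
Proof.
rewrite -sum1_card [RHS]big_mkcond; apply: eq_bigr => i _; rewrite inE.
by case: (P i).
Qed.

Section Emb.
Variables (TF : finType) (EF : {set {set TF}}).

Definition emb (V : finType) (H : {set {set V}}) : {set {ffun TF -> V}} :=
  [set f : {ffun TF -> V} | injectiveb f &&
      [forall x, forall y, (x != y) ==>
          (([set x; y] \in EF) == ([set f x; f y] \in H))]].

Lemma has_emb (V : finType) (H : {set {set V}}) :
  has_induced EF H -> exists f, f \in emb H.
Proof.
rewrite /has_induced /n_induced card_gt0 => /set0Pn [S]; rewrite inE.
case/existsP => f /and3P [fi _ fH]; exists f; by rewrite inE fi.
Qed.

Lemma emb_count (V : finType) (H : {set {set V}}) :
  #|emb H| <= n_induced EF H * #|TF| ^ #|TF|.
Proof.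
rewrite -sum1_card (partition_big (F := fun _ => 1)
   (fun f : {ffun TF -> V} => [set f x | x in setT]) (fun S => induced_copy EF H S)) /=.
  rewrite /n_induced -sum_nat_const.
  rewrite [X in _ <= X](eq_bigl (fun S => induced_copy EF H S)); last by move=> S; rewrite inE.
  apply: leq_sum => S.
  case/existsP => f /and3P [/injectiveP fi /eqP fS _].
  rewrite sum1_card.
  have eS : #|S| = #|TF| by rewrite -fS card_imset // cardsT.
  rewrite -{1}eS -card_ffun_on; apply: subset_leq_card; apply/subsetP => h.
  rewrite !inE => /andP [_ /eqP <-]; apply/ffun_onP => x.
  by apply: imset_f; rewrite inE.
move=> f; rewrite inE => /andP [fi fH]; apply/existsP; exists f.
by rewrite fi eqxx fH.
Qed.

Lemma lift_emb m n (g : {ffun 'I_m -> 'I_n}) (H : {set {set 'I_n}}) f :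
  injectiveb g -> f \in emb (pull g H) -> [ffun t => g (f t)] \in emb H.
Proof.
move=> /injectiveP gi; rewrite !inE => /andP [/injectiveP fi /forallP fH].
apply/andP; split.
  by apply/injectiveP => x y; rewrite !ffunE => /gi /fi.
apply/forallP => x; apply/forallP => y; apply/implyP => xy.
have := forallP (fH x) y; rewrite xy /= !ffunE inE.
by rewrite imsetU1 imset_set1.
Qed.

Lemma count_g m n (f : {ffun TF -> 'I_m}) (h : {ffun TF -> 'I_n}) :
  injectiveb f ->
  #|[set g : {ffun 'I_m -> 'I_n} | [ffun t => g (f t)] == h]| <= n ^ (m - #|TF|).
Proof.
move=> /injectiveP fi.
pose F := fun i : 'I_m => [set y : 'I_n | [forall t, (f t == i) ==> (y == h t)]].
apply: (@leq_trans #|family F|).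
  apply: subset_leq_card; apply/subsetP => g; rewrite inE => /eqP gh.
  apply/familyP => i; rewrite inE; apply/forallP => t; apply/implyP => /eqP <-.
  by rewrite -gh ffunE.
rewrite card_family foldrE big_map.
apply: (@leq_trans (\prod_(i <- enum 'I_m) (if i \in codom f then 1 else n))).
  apply: leq_prod => i _; case: (boolP (i \in codom f)) => [/codomP [t ->]|_].
    rewrite -(cards1 (h t)); apply: subset_leq_card; apply/subsetP => y.
    by rewrite !inE => /forallP /(_ t); rewrite eqxx.
  by apply: (leq_trans (max_card _)); rewrite card_ord.
rewrite (_ : \prod_(i <- enum 'I_m) _ = \prod_(i in [predC codom f]) n); last first.
  rewrite [RHS]big_mkcond enumT /=; apply: eq_bigr => i _; rewrite !inE.
  by case: (i \in codom f).
rewrite prod_nat_const.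
have e := cardC (mem (codom f)).
have -> : #|[predC codom f]| = #|'I_m| - #|TF| by rewrite -e card_codom // addKn.
by rewrite card_ord.
Qed.
Lemma P_bound m n (H : {set {set 'I_n}}) :
  #|[set g : {ffun 'I_m -> 'I_n} | injectiveb g && has_induced EF (pull g H)]|
  <= n_induced EF H * #|TF| ^ #|TF| * (m ^ #|TF| * n ^ (m - #|TF|)).
Proof.
apply: (@leq_trans (\sum_(g in [set g : {ffun 'I_m -> 'I_n} | injectiveb g && has_induced EF (pull g H)])
   \sum_(f in emb (pull g H)) \sum_(h in emb H) nat_of_bool ([ffun t => g (f t)] == h))).
  rewrite -sum1_card; apply: leq_sum => g; rewrite inE => /andP [gi /has_emb [f0 f0e]].
  rewrite (bigD1 f0) //=; apply: leq_trans (leq_addr _ _).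
  rewrite (bigD1 [ffun t => g (f0 t)]) /= ?eqxx //; last exact: lift_emb.
apply: (@leq_trans (\sum_(g : {ffun 'I_m -> 'I_n})
   \sum_(f : {ffun TF -> 'I_m} | injectiveb f) \sum_(h in emb H) nat_of_bool ([ffun t => g (f t)] == h))).
  apply: (@leq_trans (\sum_(g in [set g : {ffun 'I_m -> 'I_n} | injectiveb g && has_induced EF (pull g H)])
   \sum_(f : {ffun TF -> 'I_m} | injectiveb f) \sum_(h in emb H) nat_of_bool ([ffun t => g (f t)] == h))).
    apply: leq_sum => g _; apply: leq_sum_sub => f; rewrite inE; by case/andP.
  by apply: leq_sum_sub.
under eq_bigr => g _ do rewrite exchange_big /=.
rewrite exchange_big /=.
under eq_bigr => h _ do rewrite exchange_big /=.
apply: (@leq_trans (#|emb H| * (m ^ #|TF| * n ^ (m - #|TF|)))); last first.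
  by rewrite leq_mul2r emb_count orbT.
rewrite -sum_nat_const; apply: leq_sum => h hH.
apply: (@leq_trans (\sum_(f : {ffun TF -> 'I_m} | injectiveb f) n ^ (m - #|TF|))).
  apply: leq_sum => f fi; rewrite sum_ind; exact: count_g.
apply: (@leq_trans (\sum_(f : {ffun TF -> 'I_m}) n ^ (m - #|TF|))).
  exact: leq_sum_sub.
by rewrite sum_nat_const card_ffun !card_ord.
Qed.
End Emb.


Section Bad.
Variables (TF : finType) (EF : {set {set TF}}) (m n : nat).
Implicit Types (g : {ffun 'I_m -> 'I_n}) (A B E : {set {set 'I_n}}).

Lemma pullU g A B : pull g (A :|: B) = pull g A :|: pull g B.
Proof. by apply/setP => e; rewrite !inE. Qed.

Lemma pull_sub g A B : A \subset B -> pull g A \subset pull g B.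
Proof. by move=> /subsetP AB; apply/subsetP => e; rewrite !inE => /AB. Qed.

Lemma pull_graph g A : injectiveb g -> A \subset pairs 'I_n -> pull g A \subset pairs 'I_m.
Proof. by move=> gi /(pull_sub g); rewrite pull_pairs. Qed.

Definition badg E g := exstar EF m < #|pull g E|.

Lemma SS_bound E : E \subset pairs 'I_n ->
  SS m E <= #|[set g : {ffun 'I_m -> 'I_n} | injectiveb g && badg E g]| * 'C(m, 2)
            + #|[set g : {ffun 'I_m -> 'I_n} | injectiveb g]| * exstar EF m.
Proof.
move=> Ep; rewrite /SS (bigID (badg E)) /=.
apply: leq_add.
  apply: (@leq_trans (\sum_(g : {ffun 'I_m -> 'I_n} | injectiveb g && badg E g) 'C(m, 2))).
    apply: leq_sum => g /andP [gi _]; rewrite -card_pairs.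
    exact/subset_leq_card/pull_graph.
  by rewrite -sum_nat_const; apply: eq_leq; apply: eq_bigl => g; rewrite inE.
apply: (@leq_trans (\sum_(g : {ffun 'I_m -> 'I_n} | injectiveb g) exstar EF m)).
  apply: (@leq_trans (\sum_(g : {ffun 'I_m -> 'I_n} | injectiveb g && ~~ badg E g) exstar EF m)).
    by apply: leq_sum => g /andP [_]; rewrite /badg -leqNgt.
  by apply: leq_sum_sub => g /andP [].
by rewrite -sum_nat_const; apply: eq_leq; apply: eq_bigl => g; rewrite inE.
Qed.

Lemma bad_witness E E0 g : E \subset pairs 'I_n -> E0 \subset pairs 'I_n :\: E ->
  injectiveb g -> badg E g ->
  exists X' : {set {set 'I_m}}, X' \subset pull g E /\ has_induced EF (pull g E0 :|: X').
Proof.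
move=> Ep E0p gi bad.
have ng : ~~ exstar_good EF (pull g E).
  apply: contraL bad => good; rewrite -leqNgt; exact: leq_bigmax_cond.
have E0p' : E0 \subset pairs 'I_n by apply: subset_trans E0p (subsetDl _ _).
have dis : [disjoint pull g E0 & pull g E].
  rewrite -setI_eq0; apply/eqP/setP => e; rewrite !inE.
  apply/negP => /andP [/(subsetP E0p)]; rewrite inE => /andP [/negP nE _] /nE //.
move: ng; rewrite /exstar_good /is_graph (pull_graph gi Ep) /= negb_exists => /forallP /(_ (pull g E0)).
rewrite (pull_graph gi E0p') dis /= negb_forall => /existsP [X].
by rewrite negb_imply negbK => /andP [XE hX]; exists X.
Qed.
Lemma count_X E E0 g (X' : {set {set 'I_m}}) : E \subset pairs 'I_n ->
  injectiveb g -> X' \subset pull g E -> has_induced EF (pull g E0 :|: X') ->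
  2 ^ #|E| <= #|[set X in powerset E | has_induced EF (pull g (E0 :|: X))]| * 2 ^ 'C(m, 2).
Proof.
move=> Ep gi X'E hX.
pose Img := [set [set g x | x in e] | e : {set 'I_m} in pull g E].
pose Z := [set [set g x | x in e] | e : {set 'I_m} in X'].
have gi' : injective (fun e : {set 'I_m} => [set g x | x in e]).
  exact: (imset_inj (injectiveP _ gi)).
have ZImg : Z \subset Img by apply: imsetS.
have ImgE : Img \subset E.
  by apply/subsetP => y /imsetP [e]; rewrite inE => He ->.
have cardImg : #|Img| <= 'C(m, 2).
  apply: leq_trans (leq_imset_card _ _) _; rewrite -card_pairs.
  exact/subset_leq_card/pull_graph.
apply: (@leq_trans (2 ^ #|E :\: Img| * 2 ^ 'C(m, 2))).
  rewrite -expnD leq_pexp2l // -{1}(cardsID Img E) addnC leq_add2l.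
  exact: leq_trans (subset_leq_card (subsetIr _ _)) cardImg.
rewrite leq_mul2r; apply/orP; right.
rewrite -card_powerset -(card_in_imset (f := fun Y => Y :|: Z) (D := mem (powerset (E :\: Img)))).
  apply: subset_leq_card; apply/subsetP => y /imsetP [Y]; rewrite powersetE => YE ->.
  rewrite inE powersetE; apply/andP; split.
    rewrite subUset (subset_trans YE (subsetDl _ _)) /=.
    exact: subset_trans ZImg ImgE.
  have -> : pull g (E0 :|: (Y :|: Z)) = pull g E0 :|: X'; last by [].
  apply/setP => e; rewrite !inE (mem_imset _ _ gi').
  case: (boolP ([set g x | x in e] \in Y)) => hY; last by [].
  move: (subsetP YE _ hY); rewrite inE => /andP [/negP nI eE].
  by exfalso; apply: nI; apply: imset_f; rewrite inE.
move=> Y1 Y2; rewrite !inE => Y1s Y2s eq; apply/setP => x.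
have := congr1 (fun S : {set {set 'I_n}} => x \in S) eq; rewrite /= !inE.
case xZ: (x \in Z); rewrite ?orbT ?orbF //.
have xI : x \in Img by apply: (subsetP ZImg).
have n1 : x \notin Y1 by apply/negP => /(subsetP Y1s); rewrite inE xI.
have n2 : x \notin Y2 by apply/negP => /(subsetP Y2s); rewrite inE xI.
by rewrite (negPf n1) (negPf n2).
Qed.
Lemma F3 E E0 : E \subset pairs 'I_n -> E0 \subset pairs 'I_n :\: E ->
  #|[set g : {ffun 'I_m -> 'I_n} | injectiveb g && badg E g]| * 2 ^ #|E| <=
  (\sum_(X in powerset E) #|[set g : {ffun 'I_m -> 'I_n} |
        injectiveb g && has_induced EF (pull g (E0 :|: X))]|) * 2 ^ 'C(m, 2).
Proof.
move=> Ep E0p.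
pose Q (g : {ffun 'I_m -> 'I_n}) (X : {set {set 'I_n}}) :=
  injectiveb g && has_induced EF (pull g (E0 :|: X)).
rewrite -sum_nat_const.
apply: (@leq_trans (\sum_(g in [set g : {ffun 'I_m -> 'I_n} | injectiveb g && badg E g])
   #|[set X in powerset E | has_induced EF (pull g (E0 :|: X))]| * 2 ^ 'C(m, 2))).
  apply: leq_sum => g; rewrite inE => /andP [gi bad].
  have [X' [h1 h2]] := bad_witness Ep E0p gi bad; exact: count_X h2.
rewrite -big_distrl /= leq_mul2r; apply/orP; right.
apply: (@leq_trans (\sum_(g in [set g : {ffun 'I_m -> 'I_n} | injectiveb g && badg E g])
   \sum_(X in powerset E) nat_of_bool (Q g X))).
  apply: eq_leq; apply: eq_bigr => g; rewrite inE => /andP [gi _].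
  rewrite -sum_ind [RHS]big_mkcond; apply: eq_bigr => X _.
  by rewrite /Q gi; case: (X \in powerset E).
apply: (@leq_trans (\sum_(g : {ffun 'I_m -> 'I_n}) \sum_(X in powerset E) nat_of_bool (Q g X))).
  exact: leq_sum_sub.
rewrite exchange_big /=; apply: eq_leq; apply: eq_bigr => X _.
by rewrite sum_ind.
Qed.
End Bad.


Unset Implicit Arguments. Set Strict Implicit. Set Printing Implicit Defensive.
Import Order.TTheory GRing.Theory Num.Theory.
Local Open Scope ring_scope.

Lemma choose_m (R : realType) (D : nat -> R) (eps : R) : 0 < eps ->
  (forall n, 0 <= D n) -> forall M0 : nat,
  exists m : nat, (M0 <= m)%N /\ forall n, (m <= n)%N -> D m - eps <= D n.
Proof.
move=> he D0 M0; apply: NNPP => Hn.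
have H : forall m, (M0 <= m)%N -> exists n, (m <= n)%N /\ D n < D m - eps.
  move=> m hm; apply: NNPP => H2; apply: Hn; exists m; split => // n hn.
  rewrite leNgt; apply/negP => lt; apply: H2; exists n; by split.
have J : forall j : nat, exists m, (M0 <= m)%N /\ D m <= D M0 - j%:R * eps.
  elim=> [|j [m [hm hj]]]; first by exists M0; split => //; rewrite mul0r subr0.
  have [n [hn hD]] := H m hm; exists n; split; first exact: leq_trans hn.
  rewrite -addn1 natrD mulrDl mul1r; lra.
have hb := archi_boundP (divr_ge0 (D0 M0) (ltW he)).
have [m [_ hm]] := J (Num.Def.archi_bound (D M0 / eps)).
have : D M0 < (Num.Def.archi_bound (D M0 / eps))%:R * eps by rewrite -ltr_pdivrMr.
have := D0 m; lra.
Qed.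


Lemma ffact_bound n m : (2 * m <= n)%N -> (n ^ m <= 2 ^ m * n ^_ m)%N.
Proof.
elim: m => [|m IH] h; first by rewrite ffactn0.
have IH' : (n ^ m <= 2 ^ m * n ^_ m)%N by apply: IH; lia.
rewrite ffactnSr !expnS.
have h2 : (n <= 2 * (n - m))%N by lia.
set a := (n ^ m)%N in IH' *; set b := (2 ^ m)%N in IH' *; set c := (n ^_ m)%N in IH' *.
nia.
Qed.

Local Open Scope ring_scope.

Theorem corollary3 (R : realType) (TF : finType) (EF : {set {set TF}})
  (HF : is_graph EF) (eps : R) (heps : 0 < eps) :
  exists (n0 : nat) (delta : R), 0 < delta /\
    forall (n : nat) (E : {set {set 'I_n}}),
      (n0 < n)%N -> is_graph E ->
      (#|E|%:R : R) = (exstar EF n)%:R + eps * ('C(n, 2))%:R ->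
      forall E0 : {set {set 'I_n}},
        E0 \subset pairs 'I_n :\: E ->
        exists X : {set {set 'I_n}},
          X \subset E /\
          delta * (n%:R ^+ #|TF|) <= (n_induced EF (E0 :|: X))%:R.
Proof.
set k := #|TF|.
pose D := fun n => (exstar EF n)%:R / ('C(n, 2))%:R : R.
have D0 : forall n, 0 <= D n by move=> n; rewrite /D divr_ge0 ?ler0n.
have he2 : 0 < eps / 2 by lra.
have [m [hm Dm]] := @choose_m R D (eps / 2) he2 D0 (maxn 2 k).
have m2 : (2 <= m)%N by move: hm; rewrite geq_max => /andP [].
have mk : (k <= m)%N by move: hm; rewrite geq_max => /andP [].
pose Cm := 'C(m, 2).
pose c := (k ^ k * m ^ k * 2 ^ Cm)%N.
have c0 : (0 < c)%N by rewrite /c !muln_gt0 !expn_gt0; lia.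
exists (2 * m)%N, (eps / (2 * 2 ^ m * c)%N%:R).
split; first by apply: divr_gt0 => //; rewrite ltr0n; lia.
move=> n E hn Eg hE E0 E0p.
have mn : (m <= n)%N by lia.
have pE0 : (0 < #|powerset E|)%N by rewrite card_powerset expn_gt0.
have [Xs XsP XsN] := eq_bigmax_cond (fun X => n_induced EF (E0 :|: X)) pE0.
exists Xs; split; first by rewrite -powersetE.
rewrite -XsN.
set N := \max_(X in powerset E) _.
set I := #|[set g : {ffun 'I_m -> 'I_n} | injectiveb g]|.
set B := #|[set g : {ffun 'I_m -> 'I_n} | injectiveb g && badg EF E g]|.
have ha := SS_eq m Eg.
have hb := SS_bound EF m Eg.
have hc := F3 EF m Eg E0p.
have nB : (B <= N * c * n ^ (m - k))%N.
  have sumP : (\sum_(X in powerset E) #|[set g : {ffun 'I_m -> 'I_n} |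
      injectiveb g && has_induced EF (pull g (E0 :|: X))]|
      <= 2 ^ #|E| * (N * (k ^ k * (m ^ k * n ^ (m - k)))))%N.
    rewrite -(card_powerset E) -sum_nat_const; apply: leq_sum => X XE.
    apply: leq_trans (P_bound EF m (E0 :|: X)) _; rewrite -mulnA leq_mul2r; apply/orP; right.
    exact: leq_bigmax_cond.
  have := leq_trans hc (leq_mul sumP (leqnn (2 ^ Cm))).
  rewrite -/B => h.
  have h' : (B * 2 ^ #|E| <= (N * c * n ^ (m - k)) * 2 ^ #|E|)%N.
    apply: leq_trans h _; rewrite /c; apply: eq_leq.
    move: (2 ^ #|E|)%N (n ^ (m - k))%N (k ^ k)%N (m ^ k)%N (2 ^ Cm)%N => a1 a2 a3 a4 a5; clear; move: N => a6.
    by ring.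
  by rewrite leq_pmul2r ?expn_gt0 in h'.
have nI : (n ^ m <= 2 ^ m * I)%N.
  by rewrite /I card_inj_ffuns !card_ord; apply: ffact_bound; exact: ltnW.
have Cn0 : (0 < 'C(n, 2))%N by rewrite bin_gt0; exact: leq_trans m2 mn.
have Cm0 : (0 < Cm)%N by rewrite bin_gt0.
have hDm := Dm n mn; rewrite /D in hDm.
have hab : (#|E| * (I * Cm) <= (B * Cm + I * exstar EF m) * 'C(n, 2))%N.
  by rewrite -ha leq_mul2r hb orbT.
move: hab; rewrite -(ler_nat R) !natrM natrD !natrM => hab.
rewrite -/Cm in hDm.
have cm0 : 0 < (Cm%:R : R) by rewrite ltr0n.
have cn0 : 0 < ('C(n, 2)%:R : R) by rewrite ltr0n.
have nBr : (B%:R : R) <= N%:R * c%:R * (n%:R ^+ (m - k)) by rewrite -natrX -!natrM ler_nat.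
have nIr : (n%:R : R) ^+ m <= (2 ^ m)%:R * I%:R by rewrite -natrX -natrM ler_nat.
have -> : ((k ^ k)%:R * (m ^ k)%:R * (2 ^ Cm)%:R : R) = c%:R by rewrite /c !natrM.
move: hDm hab hE nBr nIr.
set x := ((exstar EF m)%:R : R); set y := ((exstar EF n)%:R : R).
set cm := (Cm%:R : R); set cn := ('C(n, 2)%:R : R); set e := (#|E|%:R : R).
set i := (I%:R : R); set b := (B%:R : R); set a := (n%:R : R) ^+ (m - k).
set nk := (n%:R : R) ^+ k; set p := ((2 ^ m)%:R : R); set cr := (c%:R : R).
move=> hDm hab hE nBr nIr.
have xu : x = (x / cm) * cm by rewrite divfK // gt_eqF.
have yv : y = (y / cn) * cn by rewrite divfK // gt_eqF.
rewrite xu in hab; rewrite yv in hE.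
have {}nIr : a * nk <= p * i by rewrite /a /nk -exprD subnK.
move: hDm hab hE; set u := x / cm; set v := y / cn => hDm hab hE.
have i0 : 0 <= i by rewrite ler0n.
have hp : 0 <= (v - u + eps / 2) * (i * cm * cn).
  by apply: mulr_ge0; [lra | rewrite !mulr_ge0 // ltW].
have key : 0 <= (b - i * eps / 2) * (cm * cn).
  rewrite hE in hab.
  have -> : (b - i * eps / 2) * (cm * cn) = ((b * cm + i * (u * cm)) * cn - (v * cn + eps * cn) * (i * cm))
     + (v - u + eps / 2) * (i * cm * cn) by field.
  by apply: addr_ge0 => //; rewrite subr_ge0.
have hB : i * eps / 2 <= b.
  by move: key; rewrite pmulr_lge0 ?mulr_gt0 //; lra.
have a0 : 0 < a by rewrite exprn_gt0 // ltr0n; exact: leq_trans (ltnW m2) mn.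
have p0 : 0 < p by rewrite ltr0n expn_gt0.
have cr0 : 0 < cr by rewrite ltr0n.
have nk0 : 0 <= nk by rewrite exprn_ge0 // ler0n.
have N0 : 0 <= (N%:R : R) by rewrite ler0n.
rewrite mulrAC ler_pdivrMr; last by rewrite !mulr_gt0.
have h1 : eps * (a * nk) <= eps * (p * i) by rewrite ler_pM2l.
have h2 : p * (i * eps / 2) <= p * b by rewrite ler_pM2l.
have h3 : p * b <= p * (N%:R * cr * a) by rewrite ler_pM2l.
have key2 : 0 <= (N%:R * (2 * p * cr) - eps * nk) * a.
  have -> : (N%:R * (2 * p * cr) - eps * nk) * a = 2 * (p * (N%:R * cr * a) - p * b)
     + 2 * (p * b - p * (i * eps / 2)) + (eps * (p * i) - eps * (a * nk)) by field.
  have g1 : 0 <= p * (N%:R * cr * a) - p * b by rewrite subr_ge0.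
  have g2 : 0 <= p * b - p * (i * eps / 2) by rewrite subr_ge0.
  have g3 : 0 <= eps * (p * i) - eps * (a * nk) by rewrite subr_ge0.
  lra.
by move: key2; rewrite pmulr_lge0 //; lra.
Qed.
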